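(* Let $p_1,p_2,p_3,p_4$ be the joints of a framework in $\mathbb{R}^2$ forming a non-degenerate rhombus, with bars $p_1p_2$, $p_2p_3$, $p_3p_4$, $p_4p_1$. If $g$ is any infinitesimal motion of this framework and $v_i=g(p_i)$ for $i=1,2,3,4$, then $v_1+v_3=v_2+v_4$.
   Context: A framework in $\mathbb{R}^d$ is a finite graph whose vertices (joints) are distinct points of $\mathbb{R}^d$ and whose edges (bars) are segments between pairs of joints. If $F$ is a framework with joint set $X$, an infinitesimal motion of $F$ is a map $g:X\to\mathbb{R}^d$ with $(g(x)-g(y))\cdot(x-y)=0$ for every bar $xy$ of $F$. Non-degenerate rhombus means $p_2-p_1=p_3-p_4$ and $p_3-p_2=p_4-p_1$, these two vectors are linearly independent, and all four sides have equal length. *)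

(* Defs.v *)
From Stdlib Require Import Reals List.
Open Scope R_scope.

Definition pt := (R * R)%type.
Definition vadd (a b : pt) : pt := (fst a + fst b, snd a + snd b).
Definition vsub (a b : pt) : pt := (fst a - fst b, snd a - snd b).
Definition dot (a b : pt) : R := fst a * fst b + snd a * snd b.

Definition lin_indep (a b : pt) : Prop :=
  forall s t : R, s * fst a + t * fst b = 0 -> s * snd a + t * snd b = 0 ->
    s = 0 /\ t = 0.

Definition nondeg_rhombus (p1 p2 p3 p4 : pt) : Prop :=
  vsub p2 p1 = vsub p3 p4 /\ vsub p3 p2 = vsub p4 p1 /\
  lin_indep (vsub p2 p1) (vsub p3 p2) /\
  dot (vsub p2 p1) (vsub p2 p1) = dot (vsub p3 p2) (vsub p3 p2) /\
  dot (vsub p3 p2) (vsub p3 p2) = dot (vsub p4 p3) (vsub p4 p3) /\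
  dot (vsub p4 p3) (vsub p4 p3) = dot (vsub p1 p4) (vsub p1 p4).

Record framework := { joints : list pt; bars : list (pt * pt) }.

(* Infinitesimal motion g : X -> R^2 (represented as a function on all of
   R^2; only its values on joints matter). *)
Definition inf_motion (F : framework) (g : pt -> pt) : Prop :=
  forall x y, In (x, y) (bars F) ->
    dot (vsub (g x) (g y)) (vsub x y) = 0.

Definition rhombus_framework (p1 p2 p3 p4 : pt) : framework :=
  {| joints := p1 :: p2 :: p3 :: p4 :: nil;
     bars := (p1, p2) :: (p2, p3) :: (p3, p4) :: (p4, p1) :: nil |}.

(* Main.v *)
Require Import Defs.
From Stdlib Require Import Reals Lra.
Open Scope R_scope.

Theorem lemma3 (p1 p2 p3 p4 : pt) (g : pt -> pt) :
  nondeg_rhombus p1 p2 p3 p4 ->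
  inf_motion (rhombus_framework p1 p2 p3 p4) g ->
  vadd (g p1) (g p3) = vadd (g p2) (g p4).
Proof.
  intros [E1 [E2 [LI _]]] M.
  assert (H12 := M p1 p2 ltac:(simpl; tauto)).
  assert (H23 := M p2 p3 ltac:(simpl; tauto)).
  assert (H34 := M p3 p4 ltac:(simpl; tauto)).
  assert (H41 := M p4 p1 ltac:(simpl; tauto)).
  revert H12 H23 H34 H41 LI E1 E2.
  destruct (g p1) as [u1 u2], (g p2) as [v1 v2], (g p3) as [w1 w2], (g p4) as [z1 z2].
  destruct p1 as [x1 y1], p2 as [x2 y2], p3 as [x3 y3], p4 as [x4 y4].
  unfold dot, vsub, vadd, lin_indep; simpl.
  intros H12 H23 H34 H41 LI E1 E2.
  injection E1; injection E2; intros F1 F2 F3 F4.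
  set (a1 := x2 - x1) in *. set (a2 := y2 - y1) in *.
  set (b1 := x3 - x2) in *. set (b2 := y3 - y2) in *.
  assert (D : a1 * b2 - b1 * a2 <> 0).
  { intro D.
    destruct (LI b2 (- a2)) as [Hb2 Ha2]; [nra|nra|].
    destruct (LI b1 (- a1)) as [Hb1 Ha1]; [nra|nra|].
    destruct (LI 1 0) as [C _]; [nra|nra|lra]. }
  set (q1 := u1 + w1 - v1 - z1).
  set (q2 := u2 + w2 - v2 - z2).
  assert (Qa : q1 * a1 + q2 * a2 = 0).
  { unfold q1, q2. assert (x3 - x4 = a1) by lra.
    assert (y3 - y4 = a2) by lra.
    assert (x1 - x2 = - a1) by (unfold a1; ring). assert (y1 - y2 = - a2) by (unfold a2; ring).
    rewrite H, H0 in H34. rewrite H1, H2 in H12. lra. }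
  assert (Qb : q1 * b1 + q2 * b2 = 0).
  { unfold q1, q2. assert (x4 - x1 = b1) by lra.
    assert (y4 - y1 = b2) by lra.
    assert (x2 - x3 = - b1) by (unfold b1; ring). assert (y2 - y3 = - b2) by (unfold b2; ring).
    rewrite H, H0 in H41. rewrite H1, H2 in H23. lra. }
  assert (Z1 : q1 * (a1 * b2 - b1 * a2) = 0).
  { replace (q1 * (a1 * b2 - b1 * a2)) with (b2 * (q1 * a1 + q2 * a2) - a2 * (q1 * b1 + q2 * b2)) by ring.
    rewrite Qa, Qb; ring. }
  assert (Z2 : q2 * (a1 * b2 - b1 * a2) = 0).
  { replace (q2 * (a1 * b2 - b1 * a2)) with (a1 * (q1 * b1 + q2 * b2) - b1 * (q1 * a1 + q2 * a2)) by ring.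
    rewrite Qa, Qb; ring. }
  apply Rmult_integral in Z1; apply Rmult_integral in Z2.
  destruct Z1 as [Z1|Z1]; [|contradiction].
  destruct Z2 as [Z2|Z2]; [|contradiction].
  unfold q1, q2 in *. f_equal; lra.
Qed.
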